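(* Let $n$ be such that $n/2$ is odd, let $\Omega\subseteq\mathbb{R}^n$ be open, let $\underline{f}$ be a vector-valued function on $\Omega$ and let $\lambda\in\mathbb{C}\setminus\{0\}$. With $A=M^{ie_N}\partial_{\underline{x}}^{-\underline{f}}$ and $B=M^{ie_N}\partial_{\underline{x}}^{\underline{f}}$ acting on (sufficiently smooth) $\mathbb{C}_n$-valued functions on $\Omega$, the following direct sum decompositions hold: (i) $\ker(A^2-\lambda^2)=\ker\left(\partial_{\underline{x}}-M^{\underline{f}+\lambda ie_N}\right)\oplus\ker\left(\partial_{\underline{x}}-M^{\underline{f}-\lambda ie_N}\right)$; (ii) $\ker(B^2-\lambda^2)=\ker\left(\partial_{\underline{x}}+M^{\underline{f}-\lambda ie_N}\right)\oplus\ker\left(\partial_{\underline{x}}+M^{\underline{f}+\lambda ie_N}\right)$.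
   Context: $\mathbb{R}_{0,n}$ is the real Clifford algebra generated by an orthonormal basis $e_1,\dots,e_n$ of $\mathbb{R}^n$ with relations $e_je_k+e_ke_j=-2\delta_{jk}$; $\mathbb{C}_n=\mathbb{R}_{0,n}\otimes\mathbb{C}$, with $i$ the complex unit. $e_N=e_1e_2\cdots e_n$ is the pseudo-scalar. The Dirac operator is $\partial_{\underline{x}}=\sum_{j=1}^n e_j\partial_{x_j}$, acting from the left. For a function $f$, $M^f$ is right multiplication: $M^fg=gf$; $\partial_{\underline{x}}^{\pm f}=\partial_{\underline{x}}\pm M^f$. *)

(* Defs.v *)
From HB Require Import structures.
From mathcomp Require Import all_boot all_order all_algebra.
From mathcomp Require Import all_classical all_reals all_analysis.
From mathcomp Require Import complex.
Set Implicit Arguments. Unset Strict Implicit. Unset Printing Implicit Defensive.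
Import Order.TTheory GRing.Theory Num.Theory.
Import numFieldNormedType.Exports.
Local Open Scope ring_scope.
Local Open Scope complex_scope.

Section Clifford.
Variables (R : realType) (n : nat).

(* C_n = R_{0,n} (x) C, with complex coefficients on the blade basis e_A,
   A a subset of {0..n-1}; e_A = e_{a_1} ... e_{a_k} with a_1 < ... < a_k. *)
Definition Cl := {ffun {set 'I_n} -> R[i]}.

(* e_A e_B = (-1)^(clsign A B) e_{A triangle B}: the exponent counts the
   transpositions needed to reorder, plus one sign per e_j e_j = -1. *)
Definition clsign (A B : {set 'I_n}) : nat :=
  #|[set p : 'I_n * 'I_n | [&& p.1 \in A, p.2 \in B & (p.2 < p.1)%N]]|
  + #|A :&: B|.

Definition clmul (a b : Cl) : Cl :=
  [ffun C => \sum_(A : {set 'I_n}) \sum_(B : {set 'I_n})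
     (if (A :\: B) :|: (B :\: A) == C
      then (-1) ^+ clsign A B * a A * b B else 0)].

Definition clone : Cl := [ffun A => (A == finset.set0)%:R].

Definition cle (j : 'I_n) : Cl := [ffun A => (A == finset.set1 j)%:R].

Definition eN : Cl := foldr clmul clone [seq cle j | j <- enum 'I_n].

Definition ieN : Cl := 'i *: eN.

Definition clvec (v : 'rV[R]_n) : Cl := \sum_(j < n) (v 0 j)%:C *: cle j.

Definition cl_partial (j : 'I_n) (g : 'rV[R]_n -> Cl) : 'rV[R]_n -> Cl :=
  fun x => [ffun A =>
    ('D_(delta_mx 0 j) (fun y => complex.Re (g y A)) x)
    +i* ('D_(delta_mx 0 j) (fun y => complex.Im (g y A)) x)].

Definition iter_partial (js : seq 'I_n) (g : 'rV[R]_n -> Cl) :=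
  foldr cl_partial g js.

Definition smooth_on (Om : set 'rV[R]_n) (g : 'rV[R]_n -> Cl) : Prop :=
  forall (js : seq 'I_n) (A : {set 'I_n}) (x : 'rV[R]_n), Om x ->
    let h := iter_partial js g in
    [/\ {for x, continuous (fun y => complex.Re (h y A))},
        {for x, continuous (fun y => complex.Im (h y A))} &
        forall j : 'I_n,
          derivable (fun y => complex.Re (h y A)) x (delta_mx 0 j) /\
          derivable (fun y => complex.Im (h y A)) x (delta_mx 0 j)].

Definition dirac_op (g : 'rV[R]_n -> Cl) : 'rV[R]_n -> Cl :=
  fun x => \sum_(j < n) clmul (cle j) (cl_partial j g x).

Definition Mr (h : 'rV[R]_n -> Cl) (g : 'rV[R]_n -> Cl) : 'rV[R]_n -> Cl :=
  fun x => clmul (g x) (h x).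

Definition Aop (f : 'rV[R]_n -> Cl) (g : 'rV[R]_n -> Cl) : 'rV[R]_n -> Cl :=
  Mr (fun=> ieN) (fun x => dirac_op g x - Mr f g x).
Definition Bop (f : 'rV[R]_n -> Cl) (g : 'rV[R]_n -> Cl) : 'rV[R]_n -> Cl :=
  Mr (fun=> ieN) (fun x => dirac_op g x + Mr f g x).

Definition ker_on (Om : set 'rV[R]_n) (T : ('rV[R]_n -> Cl) -> ('rV[R]_n -> Cl))
  (g : 'rV[R]_n -> Cl) : Prop :=
  smooth_on Om g /\ forall x, Om x -> T g x = 0.

Definition direct_sum_on (Om : set 'rV[R]_n)
  (S K1 K2 : ('rV[R]_n -> Cl) -> Prop) : Prop :=
  (forall g, S g <-> exists g1 g2, [/\ K1 g1, K2 g2 &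
                                     forall x, Om x -> g x = g1 x + g2 x])
  /\ (forall g, K1 g -> K2 g -> forall x, Om x -> g x = 0).

End Clifford.

(* Main.v *)
Require Import Defs.
From HB Require Import structures.
From mathcomp Require Import all_boot all_order all_algebra.
From mathcomp Require Import all_classical all_reals all_analysis.
From mathcomp Require Import complex.
From mathcomp Require Import ring lra.
Import Order.TTheory GRing.Theory Num.Theory.
Import numFieldNormedType.Exports.
Local Open Scope ring_scope.
Set Implicit Arguments. Unset Strict Implicit. Unset Printing Implicit Defensive.
Section Real.
Variables (R : realType) (n : nat) (Om : set 'rV[R]_n).
Hypothesis oOm : open Om.
Local Notation V := 'rV[R]_n.
Definition dj (j : 'I_n) : V := delta_mx 0 j.
Definition rD j (u : V -> R) : V -> R := fun x => 'D_(dj j) u x.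
Definition riter js u := foldr rD u js.
Definition Bs (w : V -> R) := forall x, Om x ->
  {for x, continuous w} /\ forall j, derivable w x (dj j).
Definition Pk k (u : V -> R) := forall js, (size js <= k)%N -> Bs (riter js u).
Definition rsm u := forall k, Pk k u.

Lemma nearOm x : Om x -> \forall y \near x, Om y.
Proof. by move=> Ox; apply: oOm. Qed.

Lemma riter_loc js u v : (forall y, Om y -> u y = v y) ->
  forall y, Om y -> riter js u y = riter js v y.
Proof.
move=> uv; elim: js => [|j js IH] y Oy /=; first exact: uv.
rewrite /rD; apply: near_eq_derive.
by near=> z; apply: IH; near: z; exact: nearOm.
Unshelve. all: by end_near. Qed.

Lemma Bs_eq u v : (forall y, Om y -> u y = v y) -> Bs u -> Bs v.
Proof.
move=> uv Bu x Ox; have [cu du] := Bu x Ox.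
have nuv : \forall y \near x, u y = v y.
  by near=> y; apply: uv; near: y; exact: nearOm.
split.
  have := cvg_trans (near_eq_cvg nuv) cu.
  by rewrite (uv x Ox); apply; apply: nbhs_filter.
by move=> j; apply: near_eq_derivable (du j).
Unshelve. all: by end_near. Qed.

Lemma Pk_eq k u v : (forall y, Om y -> u y = v y) -> Pk k u -> Pk k v.
Proof.
move=> uv Pu js hjs; apply: Bs_eq (Pu js hjs).
exact: riter_loc.
Qed.

Lemma Pk_B k w : Pk k w -> Bs w.
Proof. by move=> P; apply: (P [::]). Qed.

Lemma Pk0 w : Bs w -> Pk 0 w.
Proof. by move=> B [|//]. Qed.

Lemma PkS k w : Bs w -> (forall j, Pk k (rD j w)) -> Pk k.+1 w.
Proof.
move=> B P js; case/lastP: js => [|js j] // hs.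
rewrite /riter -cats1 foldr_cat /=; apply: P.
by move: hs; rewrite size_rcons.
Qed.

Lemma PkD k w j : Pk k.+1 w -> Pk k (rD j w).
Proof.
move=> P js hs; have := P (rcons js j).
by rewrite size_rcons ltnS /riter -cats1 foldr_cat; apply.
Qed.

Lemma Pk_le k w : Pk k.+1 w -> Pk k w.
Proof. by move=> P js hs; apply: P; apply: leqW. Qed.

Lemma Bs_add u v : Bs u -> Bs v -> Bs (fun y => u y + v y).
Proof.
move=> Bu Bv x Ox; have [cu du] := Bu x Ox; have [cv dv] := Bv x Ox.
split; first by move: cu cv; rewrite /prop_for /continuous_at => cu cv; exact: (cvgD cu cv).
by move=> j; exact: (derivableD (du j) (dv j)).
Qed.

Lemma Bs_mul u v : Bs u -> Bs v -> Bs (fun y => u y * v y).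
Proof.
move=> Bu Bv x Ox; have [cu du] := Bu x Ox; have [cv dv] := Bv x Ox.
split; first by move: cu cv; rewrite /prop_for /continuous_at => cu cv; exact: (cvgM cu cv).
by move=> j; exact: (derivableM (du j) (dv j)).
Qed.

Lemma Bs_cst c : Bs (fun=> c).
Proof.
move=> x Ox; split. rewrite /prop_for /continuous_at. by apply: cvg_cst; apply: nbhs_filter.
by move=> j; apply: derivable_cst.
Qed.

Lemma Pk_add k u v : Pk k u -> Pk k v -> Pk k (fun y => u y + v y).
Proof.
elim: k u v => [|k IH] u v Pu Pv.
  by apply: Pk0; apply: Bs_add; [apply: Pk_B Pu|apply: Pk_B Pv].
apply: PkS; first by apply: Bs_add; [apply: Pk_B Pu|apply: Pk_B Pv].
move=> j; apply: (Pk_eq _ (IH _ _ (PkD j Pu) (PkD j Pv))).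
move=> y Oy; rewrite /rD deriveD //.
  by have [_ ] := Pk_B Pu Oy.
by have [_ ] := Pk_B Pv Oy.
Qed.

Lemma Pk_mul k u v : Pk k u -> Pk k v -> Pk k (fun y => u y * v y).
Proof.
elim: k u v => [|k IH] u v Pu Pv.
  by apply: Pk0; apply: Bs_mul; [apply: Pk_B Pu|apply: Pk_B Pv].
apply: PkS; first by apply: Bs_mul; [apply: Pk_B Pu|apply: Pk_B Pv].
move=> j; apply: Pk_eq (Pk_add (IH _ _ (Pk_le Pu) (PkD j Pv))
                              (IH _ _ (Pk_le Pv) (PkD j Pu))).
move=> y Oy; rewrite /rD deriveM //.
  by have [_ ] := Pk_B Pu Oy.
by have [_ ] := Pk_B Pv Oy.
Qed.

Lemma Pk_cst k c : Pk k (fun=> c).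
Proof.
elim: k c => [|k IH] c; first exact/Pk0/Bs_cst.
apply: PkS; first exact: Bs_cst.
move=> j; apply: Pk_eq (IH 0) => y Oy.
by rewrite /rD derive_cst.
Qed.

Lemma rsm_add u v : rsm u -> rsm v -> rsm (fun y => u y + v y).
Proof. by move=> hu hv k; apply: Pk_add. Qed.
Lemma rsm_mul u v : rsm u -> rsm v -> rsm (fun y => u y * v y).
Proof. by move=> hu hv k; apply: Pk_mul. Qed.
Lemma rsm_cst c : rsm (fun=> c).
Proof. by move=> k; apply: Pk_cst. Qed.
Lemma rsm_eq u v : (forall y, Om y -> u y = v y) -> rsm u -> rsm v.
Proof. by move=> uv hu k; apply: Pk_eq (hu k). Qed.
Lemma rsm_opp u : rsm u -> rsm (fun y => - u y).
Proof.
move=> hu; apply: rsm_eq (rsm_mul (rsm_cst (-1)) hu) => y _.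
by rewrite mulN1r.
Qed.
Lemma rsm_D j u : rsm u -> rsm (rD j u).
Proof. by move=> hu k; apply: PkD. Qed.
Lemma rsm_B u : rsm u -> Bs u.
Proof. by move=> hu; apply: (Pk_B (hu 0)). Qed.

End Real.
Section Cliff.
Variables (R : realType) (n : nat).
Local Notation Cl := (Cl R n).
Local Open Scope complex_scope.
Lemma scC (k x : R[i]) : k *: x = k * x.
Proof. by []. Qed.
Lemma ii : ('i : R[i]) * 'i = -1.
Proof. by apply/eqP; rewrite eq_complex /=; apply/andP; split; apply/eqP; ring. Qed.

Lemma clmulDl (a b c : Cl) : clmul (a + b) c = clmul a c + clmul b c.
Proof.
apply/ffunP => C; rewrite !ffunE -big_split; apply: eq_bigr => A _.
rewrite -big_split; apply: eq_bigr => B _; rewrite ffunE.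
by case: (_ == C) => /=; [ring| rewrite addr0].
Qed.

Lemma clmulDr (a b c : Cl) : clmul a (b + c) = clmul a b + clmul a c.
Proof.
apply/ffunP => C; rewrite !ffunE -big_split; apply: eq_bigr => A _.
rewrite -big_split; apply: eq_bigr => B _; rewrite ffunE.
by case: (_ == C) => /=; [ring| rewrite addr0].
Qed.

Lemma clmulZl k (a c : Cl) : clmul (k *: a) c = k *: clmul a c.
Proof.
apply/ffunP => C; rewrite !ffunE scaler_sumr; apply: eq_bigr => A _.
rewrite scaler_sumr; apply: eq_bigr => B _; rewrite !ffunE !scC.
by case: (_ == C); [ring| rewrite mulr0].
Qed.

Lemma clmulZr k (a c : Cl) : clmul a (k *: c) = k *: clmul a c.
Proof.
apply/ffunP => C; rewrite !ffunE scaler_sumr; apply: eq_bigr => A _.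
rewrite scaler_sumr; apply: eq_bigr => B _; rewrite !ffunE !scC.
by case: (_ == C); [ring| rewrite mulr0].
Qed.

Lemma clmulNr (a c : Cl) : clmul a (- c) = - clmul a c.
Proof. by rewrite -scaleN1r clmulZr scaleN1r. Qed.
Lemma clmulNl (a c : Cl) : clmul (- a) c = - clmul a c.
Proof. by rewrite -scaleN1r clmulZl scaleN1r. Qed.
Lemma clmulBr (a b c : Cl) : clmul a (b - c) = clmul a b - clmul a c.
Proof. by rewrite clmulDr clmulNr. Qed.
Lemma clmulBl (a b c : Cl) : clmul (a - b) c = clmul a c - clmul b c.
Proof. by rewrite clmulDl clmulNl. Qed.
Lemma clmul0l (c : Cl) : clmul 0 c = 0.
Proof. by have := clmulZl 0 0 c; rewrite !scale0r. Qed.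

Lemma clmul_suml I (s : seq I) (P : pred I) (F : I -> Cl) b :
  clmul (\sum_(i <- s | P i) F i) b = \sum_(i <- s | P i) clmul (F i) b.
Proof.
elim: s => [|i s IH]; first by rewrite !big_nil clmul0l.
by rewrite !big_cons -IH; case: (P i) => //; rewrite clmulDl.
Qed.

Definition blade (A : {set 'I_n}) : Cl := [ffun C => (C == A)%:R].
Definition sdiff (A B : {set 'I_n}) := (A :\: B) :|: (B :\: A).

Lemma clmul_blade A B :
  clmul (blade A) (blade B) = (-1) ^+ clsign A B *: blade (sdiff A B).
Proof.
apply/ffunP => C; rewrite !ffunE.
rewrite (bigD1 A) //= [X in _ + X]big1 ?addr0; last first.
  move=> A' nA; apply: big1 => B' _; rewrite !ffunE.
  by case: (_ == C) => //; rewrite (negbTE nA) mulr0 mul0r.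
rewrite (bigD1 B) //= [X in _ + X]big1 ?addr0; last first.
  move=> B' nB; rewrite !ffunE.
  by case: (_ == C) => //; rewrite (negbTE nB) mulr0.
rewrite !ffunE !eqxx !mulr1 /sdiff eq_sym scC.
by case: (C == _); rewrite /= ?mulr1n ?mulr0n ?mulr1 ?mulr0.
Qed.

Lemma cl_decomp (X : Cl) : X = \sum_(A : {set 'I_n}) X A *: blade A.
Proof.
apply/ffunP => C; rewrite sum_ffunE (bigD1 C) //= [X in _ + X]big1 ?addr0.
  by rewrite !ffunE eqxx scC mulr1.
move=> A nA; rewrite !ffunE scC [C == A]eq_sym (negbTE nA).
by rewrite mulr0.
Qed.

End Cliff.
From mathcomp Require Import zify.
Section Sign.
Variables (R : realType) (n : nat).
Local Notation Cl := (Cl R n).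
Local Open Scope complex_scope.

Lemma blade_eq (A B : {set 'I_n}) : A = B -> blade R A = blade R B.
Proof. by move=> ->. Qed.

Lemma foldr_blade (s : seq 'I_n) :
  sorted (fun a b : 'I_n => (a < b)%N) s ->
  foldr (@clmul R n) (clone R n) [seq cle R j | j <- s] = blade R [set x in s].
Proof.
elim: s => [|j s IH] /=.
  by move=> _; apply/ffunP => C; rewrite !ffunE; congr ((_ == _)%:R).
move=> hp; rewrite IH; last exact: path_sorted hp.
have hall : all (fun b : 'I_n => (j < b)%N) s.
  by apply: order_path_min hp => a b c; exact: ltn_trans.
have jns : j \notin s.
  by apply/negP => js; have := allP hall j js; rewrite ltnn.
change (cle R j) with (blade R [set j]).
rewrite clmul_blade.
have -> : clsign [set j] [set x in s] = 0%N.
  rewrite /clsign.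
  have -> : [set p : 'I_n * 'I_n | [&& p.1 \in [set j], p.2 \in [set x in s]
              & (p.2 < p.1)%N]] = finset.set0.
    apply/setP => -[p q]; rewrite !inE /=.
    apply/negbTE/and3P => -[/eqP -> qs qj].
    by have := allP hall q qs; rewrite /= ltnNge (ltnW qj).
  have -> : [set j] :&: [set x in s] = finset.set0.
    apply/setP => x; rewrite !inE; apply/negbTE/andP => -[/eqP -> js].
    by rewrite js in jns.
  by rewrite !cards0.
rewrite expr0 scale1r; apply: blade_eq; apply/setP => x; rewrite /sdiff !inE.
by case: (x =P j) => [->|]; rewrite ?(negbTE jns) //= andbF.
Qed.

Lemma eN_blade : eN R n = blade R [set: 'I_n].
Proof.
rewrite /eN foldr_blade.
  by apply: blade_eq; apply/setP => x; rewrite !inE mem_enum.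
by have := iota_ltn_sorted 0 n; rewrite -val_enum_ord sorted_map.
Qed.

Lemma cnt_lt i m : (\sum_(q < m) ((q : nat) < i)%N)%N = minn i m.
Proof.
elim: m => [|m IH]; first by rewrite big_ord0 minn0.
rewrite big_ord_recr /= IH.
by case: (ltnP m i) => h /=; lia.
Qed.

Lemma sum_ord m : ((\sum_(i < m) (i : nat)).*2 = m * m.-1)%N.
Proof.
elim: m => [|m IH]; first by rewrite big_ord0.
rewrite big_ord_recr /= doubleD IH; case: m {IH} => //= m; lia.
Qed.

Definition SS (A : {set 'I_n}) := [set p : 'I_n * 'I_n |
  [&& p.1 \in A, p.2 \in [set: 'I_n] & (p.2 < p.1)%N]].

Lemma card_SST : (#|SS [set: 'I_n]| = \sum_(i < n) (i : nat))%N.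
Proof.
rewrite -sum1_card big_mkcond /=.
rewrite (eq_bigr (fun p : 'I_n * 'I_n => (fun i j : 'I_n =>
   if (i, j) \in SS [set: 'I_n] then 1%N else 0%N) p.1 p.2)); last by case.
transitivity (\sum_(i : 'I_n) \sum_(j : 'I_n)
   (if (i, j) \in SS [set: 'I_n] then 1 else 0))%N.
  by rewrite pair_bigA.
apply: eq_bigr => i _.
rewrite -[RHS](@minn_idPl i n _) ?(ltnW (ltn_ord i)) // -cnt_lt.
by apply: eq_bigr => q _; rewrite !inE /=; case: (q < i)%N.
Qed.

Lemma sign_odd (A : {set 'I_n}) : (2 %| n)%N -> odd (n %/ 2) ->
  odd (clsign A [set: 'I_n] + clsign (~: A) [set: 'I_n]).
Proof.
move=> h2 ho.
have e1 : (#|SS A| + #|SS (~: A)| = #|SS [set: 'I_n]|)%N.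
  rewrite -(cardsID [set p : 'I_n * 'I_n | p.1 \in A] (SS [set: 'I_n])).
  by congr addn; apply: eq_card => -[p q]; rewrite !inE /= // andbC.
have e2 : (#|A :&: [set: 'I_n]| + #|~: A :&: [set: 'I_n]| = n)%N.
  by rewrite !finset.setIT cardsC card_ord.
have -> : (clsign A [set: 'I_n] + clsign (~: A) [set: 'I_n] =
   (#|SS A| + #|SS (~: A)|) + (#|A :&: [set: 'I_n]| + #|~: A :&: [set: 'I_n]|))%N.
  by rewrite /clsign /SS; lia.
rewrite e1 e2 card_SST.
have := sum_ord n; set s := (\sum_(i < n) (i : nat))%N => hs.
have hn := divnK h2; set m := (n %/ 2)%N in ho hn.
rewrite -hn in hs *.
have -> : (s + m * 2 = m * (m * 2).+1)%N.
  by move: hs; rewrite -muln2; case: m {ho hn} => //= m'; nia.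
by rewrite oddM ho /= muln2 odd_double.
Qed.

Lemma clmul_eN2 (X : Cl) : (2 %| n)%N -> odd (n %/ 2) ->
  clmul (clmul X (eN R n)) (eN R n) = - X.
Proof.
move=> h2 ho.
rewrite [in LHS](cl_decomp X) eN_blade !clmul_suml [in RHS](cl_decomp X) -sumrN.
apply: eq_bigr => A _.
rewrite !clmulZl clmul_blade clmulZl clmul_blade scalerA.
have -> : sdiff A [set: 'I_n] = ~: A.
  by apply/setP => x; rewrite /sdiff !inE; case: (x \in A).
have -> : sdiff (~: A) [set: 'I_n] = A.
  by apply/setP => x; rewrite /sdiff !inE; case: (x \in A).
rewrite scalerA -mulrA -exprD -signr_odd sign_odd // expr1 mulrN1.
by rewrite scaleNr.
Qed.

Lemma clmul_ieN2 (X : Cl) : (2 %| n)%N -> odd (n %/ 2) ->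
  clmul (clmul X (ieN R n)) (ieN R n) = X.
Proof.
move=> h2 ho; rewrite /ieN !clmulZr clmulZl scalerA clmul_eN2 //.
by rewrite ii scaleN1r opprK.
Qed.

End Sign.
Section Smooth.
Variables (R : realType) (n : nat) (Om : set 'rV[R]_n).
Hypothesis oOm : open Om.
Local Notation V := 'rV[R]_n.
Local Notation Cl := (Cl R n).
Local Open Scope complex_scope.

Lemma ReD (a b : R[i]) : complex.Re (a + b) = complex.Re a + complex.Re b.
Proof. by case: a; case: b. Qed.
Lemma ImD (a b : R[i]) : complex.Im (a + b) = complex.Im a + complex.Im b.
Proof. by case: a; case: b. Qed.
Lemma ReM (a b : R[i]) : complex.Re (a * b) =
  complex.Re a * complex.Re b + (- complex.Im a) * complex.Im b.
Proof. by case: a => ? ?; case: b => ? ? /=; rewrite mulNr. Qed.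
Lemma ImM (a b : R[i]) : complex.Im (a * b) =
  complex.Re a * complex.Im b + complex.Im a * complex.Re b.
Proof. by case: a; case: b. Qed.

Definition csm (u : V -> R[i]) :=
  rsm Om (fun y => complex.Re (u y)) /\ rsm Om (fun y => complex.Im (u y)).

Lemma csm_add u v : csm u -> csm v -> csm (fun y => u y + v y).
Proof.
move=> [h1 h2] [h3 h4]; split.
  by apply: (rsm_eq oOm _) (rsm_add oOm h1 h3) => y _; rewrite ReD.
by apply: (rsm_eq oOm _) (rsm_add oOm h2 h4) => y _; rewrite ImD.
Qed.

Lemma csm_mul u v : csm u -> csm v -> csm (fun y => u y * v y).
Proof.
move=> [h1 h2] [h3 h4]; split.
  apply: (rsm_eq oOm _) (rsm_add oOm (rsm_mul oOm h1 h3) (rsm_mul oOm (rsm_opp oOm h2) h4)).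
  by move=> y _; rewrite ReM.
apply: (rsm_eq oOm _) (rsm_add oOm (rsm_mul oOm h1 h4) (rsm_mul oOm h2 h3)).
by move=> y _; rewrite ImM.
Qed.

Lemma csm_cst c : csm (fun=> c).
Proof. by split; apply: rsm_cst. Qed.

Lemma csm_eq u v : (forall y, Om y -> u y = v y) -> csm u -> csm v.
Proof.
move=> uv [h1 h2]; split.
  by apply: (rsm_eq oOm _ h1) => y Oy; rewrite uv.
by apply: (rsm_eq oOm _ h2) => y Oy; rewrite uv.
Qed.

Lemma csm_sum I (s : seq I) (P : pred I) (F : I -> V -> R[i]) :
  (forall i, csm (F i)) -> csm (fun y => \sum_(i <- s | P i) F i y).
Proof.
move=> hF; elim: s => [|i s IH].
  by apply: csm_eq (csm_cst 0) => y _; rewrite big_nil.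
case hP : (P i).
  by apply: csm_eq (csm_add (hF i) IH) => y _; rewrite big_cons hP.
by apply: csm_eq IH => y _; rewrite big_cons hP.
Qed.

Lemma iterRe js (g : V -> Cl) A y :
  complex.Re (iter_partial js g y A) = riter js (fun z => complex.Re (g z A)) y.
Proof.
elim: js y => [|j js IH] y //=.
rewrite /cl_partial ffunE /= /rD.
have -> : (fun z => complex.Re (iter_partial js g z A)) =
          riter js (fun z => complex.Re (g z A)) by apply/funext => z; exact: IH.
by [].
Qed.

Lemma iterIm js (g : V -> Cl) A y :
  complex.Im (iter_partial js g y A) = riter js (fun z => complex.Im (g z A)) y.
Proof.
elim: js y => [|j js IH] y //=.
rewrite /cl_partial ffunE /= /rD.
have -> : (fun z => complex.Im (iter_partial js g z A)) =
          riter js (fun z => complex.Im (g z A)) by apply/funext => z; exact: IH.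
by [].
Qed.

Lemma smoothP (g : V -> Cl) : smooth_on Om g <-> forall A, csm (fun y => g y A).
Proof.
split.
  move=> sg A; split=> k js _ x Ox; have [c1 c2 d] := sg js A x Ox.
    have e : (fun y => complex.Re (iter_partial js g y A)) =
             riter js (fun z => complex.Re (g z A)) by apply/funext => z; exact: iterRe.
    rewrite -e; split => // j; by case: (d j).
  have e : (fun y => complex.Im (iter_partial js g y A)) =
           riter js (fun z => complex.Im (g z A)) by apply/funext => z; exact: iterIm.
  rewrite -e; split => // j; by case: (d j).
move=> h js A x Ox /=.
have [h1 h2] := h A.
have e1 : (fun y => complex.Re (iter_partial js g y A)) =
          riter js (fun z => complex.Re (g z A)) by apply/funext => z; exact: iterRe.
have e2 : (fun y => complex.Im (iter_partial js g y A)) =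
          riter js (fun z => complex.Im (g z A)) by apply/funext => z; exact: iterIm.
have [c1 d1] := h1 (size js) js (leqnn _) x Ox.
have [c2 d2] := h2 (size js) js (leqnn _) x Ox.
rewrite e1 e2; split => // j; split; [exact: d1 | exact: d2].
Qed.

End Smooth.
Section SmoothCl.
Variables (R : realType) (n : nat) (Om : set 'rV[R]_n).
Hypothesis oOm : open Om.
Local Notation V := 'rV[R]_n.
Local Notation Cl := (Cl R n).
Local Notation sm := (smooth_on Om).
Local Open Scope complex_scope.

Lemma sm_eq (g h : V -> Cl) : (forall y, Om y -> g y = h y) -> sm g -> sm h.
Proof.
move=> gh /smoothP hg; apply/smoothP => A.
by apply: (csm_eq oOm _ (hg A)) => y Oy; rewrite gh.
Qed.

Lemma sm_add (g h : V -> Cl) : sm g -> sm h -> sm (fun y => g y + h y).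
Proof.
move=> /smoothP hg /smoothP hh; apply/smoothP => A.
by apply: (csm_eq oOm _ (csm_add oOm (hg A) (hh A))) => y _; rewrite ffunE.
Qed.

Lemma sm_scale c (g : V -> Cl) : sm g -> sm (fun y => c *: g y).
Proof.
move=> /smoothP hg; apply/smoothP => A.
by apply: (csm_eq oOm _ (csm_mul oOm (csm_cst oOm c) (hg A))) => y _; rewrite ffunE.
Qed.

Lemma sm_cst (c : Cl) : sm (fun=> c).
Proof. by apply/smoothP => A; apply: (csm_cst oOm). Qed.

Lemma sm_mul (g h : V -> Cl) : sm g -> sm h -> sm (fun y => clmul (g y) (h y)).
Proof.
move=> /smoothP hg /smoothP hh; apply/smoothP => C.
apply: (csm_eq oOm (u := fun y => \sum_A \sum_B
   (if (A :\: B) :|: (B :\: A) == C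
    then (-1) ^+ clsign A B * g y A * h y B else 0))).
  by move=> y _; rewrite ffunE.
apply: (csm_sum oOm) => A; apply: (csm_sum oOm) => B.
case: (_ == C); last exact: (csm_cst oOm).
exact: (csm_mul oOm (csm_mul oOm (csm_cst oOm ((-1) ^+ clsign A B)) (hg A)) (hh B)).
Qed.

Lemma sm_sum I (s : seq I) (P : pred I) (F : I -> V -> Cl) :
  (forall i, sm (F i)) -> sm (fun y => \sum_(i <- s | P i) F i y).
Proof.
move=> hF; apply/smoothP => A.
apply: (csm_eq oOm (u := fun y => \sum_(i <- s | P i) F i y A)).
  by move=> y _; rewrite sum_ffunE.
by apply: (csm_sum oOm) => i; move/smoothP: (hF i); apply.
Qed.

Lemma sm_partial j (g : V -> Cl) : sm g -> sm (cl_partial j g).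
Proof.
move=> /smoothP hg; apply/smoothP => A; have [h1 h2] := hg A; split.
  apply: (rsm_eq oOm _ (rsm_D j h1)) => y _.
  by rewrite /cl_partial ffunE.
apply: (rsm_eq oOm _ (rsm_D j h2)) => y _.
by rewrite /cl_partial ffunE.
Qed.

Lemma sm_dirac (g : V -> Cl) : sm g -> sm (dirac_op g).
Proof.
move=> hg; rewrite /dirac_op.
exact: (@sm_sum _ (index_enum 'I_n) xpredT
  (fun j y => clmul (cle R j) (cl_partial j g y))
  (fun j => sm_mul (sm_cst _) (sm_partial j hg))).
Qed.

Lemma sm_der (g : V -> Cl) A x j : sm g -> Om x ->
  derivable (fun y => complex.Re (g y A)) x (delta_mx 0 j) /\
  derivable (fun y => complex.Im (g y A)) x (delta_mx 0 j).
Proof. by move=> sg Ox; have [_ _ d] := sg [::] A x Ox; apply: d. Qed.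

Lemma Dlin (a b : R) (u v : V -> R) x w : derivable u x w -> derivable v x w ->
  'D_w (fun y => a * u y + b * v y) x = a * 'D_w u x + b * 'D_w v x.
Proof.
move=> du dv.
have da : derivable (fun y => a * u y) x w := derivableM (derivable_cst a x w) du.
have db : derivable (fun y => b * v y) x w := derivableM (derivable_cst b x w) dv.
rewrite (deriveD da db).
by rewrite (deriveMl a du) (deriveMl b dv).
Qed.

Lemma cp_add j (g h : V -> Cl) x : sm g -> sm h -> Om x ->
  cl_partial j (fun y => g y + h y) x = cl_partial j g x + cl_partial j h x.
Proof.
move=> sg sh Ox; apply/ffunP => A; rewrite !ffunE.
have [d1 d2] := sm_der A j sg Ox; have [d3 d4] := sm_der A j sh Ox.
have -> : (fun y => complex.Re ((g y + h y) A)) =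
   (fun y => complex.Re (g y A) + complex.Re (h y A)).
  by apply/funext => y; rewrite ffunE ReD.
have -> : (fun y => complex.Im ((g y + h y) A)) =
   (fun y => complex.Im (g y A) + complex.Im (h y A)).
  by apply/funext => y; rewrite ffunE ImD.
by rewrite (deriveD d1 d3) (deriveD d2 d4).
Qed.

Lemma cp_scale j c (g : V -> Cl) x : sm g -> Om x ->
  cl_partial j (fun y => c *: g y) x = c *: cl_partial j g x.
Proof.
move=> sg Ox; apply/ffunP => A; rewrite !ffunE.
have [d1 d2] := sm_der A j sg Ox.
have -> : (fun y => complex.Re ((c *: g y) A)) =
   (fun y => complex.Re c * complex.Re (g y A) + (- complex.Im c) * complex.Im (g y A)).
  by apply/funext => y; rewrite ffunE scC ReM.
have -> : (fun y => complex.Im ((c *: g y) A)) =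
   (fun y => complex.Re c * complex.Im (g y A) + complex.Im c * complex.Re (g y A)).
  by apply/funext => y; rewrite ffunE scC ImM.
rewrite (Dlin _ _ d1 d2) (Dlin _ _ d2 d1) scC.
case: c => a b /=.
by apply/eqP; rewrite eq_complex /=; apply/andP; split; apply/eqP; ring.
Qed.

Lemma cp_loc j (g h : V -> Cl) x : (forall y, Om y -> g y = h y) -> Om x ->
  cl_partial j g x = cl_partial j h x.
Proof.
move=> gh Ox; apply/ffunP => A; rewrite !ffunE.
congr (_ +i* _); apply: near_eq_derive; near=> y; rewrite gh //;
  near: y; exact: nearOm oOm x Ox.
Unshelve. all: by end_near. Qed.

Lemma dirac_add (g h : V -> Cl) x : sm g -> sm h -> Om x ->
  dirac_op (fun y => g y + h y) x = dirac_op g x + dirac_op h x.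
Proof.
move=> sg sh Ox; rewrite /dirac_op -big_split; apply: eq_bigr => j _.
by rewrite cp_add // clmulDr.
Qed.

Lemma dirac_scale c (g : V -> Cl) x : sm g -> Om x ->
  dirac_op (fun y => c *: g y) x = c *: dirac_op g x.
Proof.
move=> sg Ox; rewrite /dirac_op scaler_sumr; apply: eq_bigr => j _.
by rewrite cp_scale // clmulZr.
Qed.

Lemma dirac_loc (g h : V -> Cl) x : (forall y, Om y -> g y = h y) -> Om x ->
  dirac_op g x = dirac_op h x.
Proof.
move=> gh Ox; rewrite /dirac_op; apply: eq_bigr => j _.
by rewrite (cp_loc j gh Ox).
Qed.

End SmoothCl.
Definition AopJ (R : realType) (n : nat) (J : Cl R n) (F g : 'rV[R]_n -> Cl R n) :
  'rV[R]_n -> Cl R n := fun x => clmul (dirac_op g x - clmul (g x) (F x)) J.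

Section Main.
Variables (R : realType) (n : nat) (Om : set 'rV[R]_n).
Hypothesis oOm : open Om.
Variables (J : Cl R n) (hJ : forall X, clmul (clmul X J) J = X).
Local Notation V := 'rV[R]_n.
Local Notation Cl := (Cl R n).
Local Notation sm := (smooth_on Om).
Local Open Scope complex_scope.

Lemma sq (X : Cl) : clmul (clmul X J) J = X.
Proof. exact: hJ. Qed.

Lemma sm_sub (g h : V -> Cl) : sm g -> sm h -> sm (fun y => g y - h y).
Proof.
move=> sg sh; apply: (sm_eq oOm _ (sm_add oOm sg (sm_scale oOm (-1) sh))).
by move=> y _; rewrite scaleN1r.
Qed.

Lemma dirac_sub (g h : V -> Cl) x : sm g -> sm h -> Om x ->
  dirac_op (fun y => g y - h y) x = dirac_op g x - dirac_op h x.
Proof.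
move=> sg sh Ox.
rewrite (dirac_loc oOm (h := fun y => g y + (-1) *: h y)) //; last first.
  by move=> y _; rewrite scaleN1r.
rewrite (@dirac_add _ _ Om) //; last exact: sm_scale.
by rewrite (@dirac_scale _ _ Om) // scaleN1r.
Qed.

Variables (F : V -> Cl) (sF : sm F) (mu : R[i]) (mu0 : mu != 0).

Lemma two_mu : 2 * mu != 0.
Proof. by rewrite mulf_neq0 // pnatr_eq0. Qed.

Lemma gen : direct_sum_on Om
  (ker_on Om (fun g x => AopJ J F (AopJ J F g) x - mu ^+ 2 *: g x))
  (ker_on Om (fun g x => dirac_op g x - clmul (g x) (F x + mu *: J)))
  (ker_on Om (fun g x => dirac_op g x - clmul (g x) (F x - mu *: J))).
Proof.
split; last first.
  move=> g [sg K1] [_ K2] x Ox.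
  have e : (2 * mu) *: clmul (g x) J = 0.
    have E1 := subr0_eq (K1 x Ox); have E2 := subr0_eq (K2 x Ox).
    have : clmul (g x) (F x + mu *: J) - clmul (g x) (F x - mu *: J) = 0.
      by rewrite -E1 -E2 subrr.
    rewrite clmulDr clmulBr !clmulZr.
    move: (clmul (g x) (F x)) (clmul (g x) J) => c b H.
    apply/ffunP => C; move/ffunP: H => /(_ C).
    by rewrite !ffunE !scC => <-; ring.
  have e' : clmul (g x) J = 0.
    by rewrite -[clmul (g x) J](scalerK two_mu) e scaler0.
  by rewrite -(sq (g x)) e' clmul0l.
move=> g; split.
  move=> [sg Hg].
  pose Ag := AopJ J F g.
  have sAg : sm Ag.
    rewrite /Ag /AopJ.
    exact: (sm_mul oOm (sm_sub (sm_dirac oOm sg) (sm_mul oOm sg sF)) (sm_cst oOm J)).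
  exists (fun y => (2 * mu)^-1 *: (Ag y + mu *: g y)).
  exists (fun y => - (2 * mu)^-1 *: (Ag y - mu *: g y)).
  have hD x : Om x -> dirac_op Ag x = clmul (Ag x) (F x) + mu ^+ 2 *: clmul (g x) J.
    move=> Ox.
    have e : clmul (dirac_op Ag x - clmul (Ag x) (F x)) J = mu ^+ 2 *: g x :=
      subr0_eq (Hg x Ox).
    have : dirac_op Ag x - clmul (Ag x) (F x) = mu ^+ 2 *: clmul (g x) J.
      by rewrite -[LHS]sq e clmulZl.
    by move=> <-; rewrite addrC subrK.
  have hAI x : clmul (Ag x) J = dirac_op g x - clmul (g x) (F x) by exact: sq.
  split.
  - split; first exact/sm_scale/sm_add/sm_scale.
    move=> x Ox.
    rewrite (@dirac_scale _ _ Om) //; last exact/sm_add/sm_scale.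
    rewrite (@dirac_add _ _ Om) //; last exact/sm_scale.
    rewrite (@dirac_scale _ _ Om) // hD //.
    rewrite ?(clmulDr, clmulDl, clmulNr, clmulNl, clmulZr, clmulZl) hAI.
    move: (clmul (Ag x) (F x)) (clmul (g x) J) (dirac_op g x) (clmul (g x) (F x)) => a b d c.
    by apply/ffunP => C; rewrite !ffunE !scC; ring.
  - split; first exact/sm_scale/sm_sub/sm_scale.
    move=> x Ox.
    rewrite (@dirac_scale _ _ Om) //; last exact/sm_sub/sm_scale.
    rewrite dirac_sub //; last exact/sm_scale.
    rewrite (@dirac_scale _ _ Om) // hD //.
    rewrite ?(clmulDr, clmulDl, clmulNr, clmulNl, clmulZr, clmulZl) hAI.
    move: (clmul (Ag x) (F x)) (clmul (g x) J) (dirac_op g x) (clmul (g x) (F x)) => a b d c.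
    by apply/ffunP => C; rewrite !ffunE !scC; ring.
  - move=> x Ox; apply/ffunP => C; rewrite !ffunE !scC.
    by field.
move=> [g1 [g2 [[s1 K1] [s2 K2] e]]].
have sg : sm g.
  by apply: (sm_eq oOm _ (sm_add oOm s1 s2)) => y Oy; rewrite e.
split => // x Ox.
have hAg y : Om y -> AopJ J F g y = mu *: (g1 y - g2 y).
  move=> Oy; rewrite /AopJ.
  rewrite (dirac_loc oOm (h := fun z => g1 z + g2 z) e Oy).
  rewrite (@dirac_add _ _ Om) // (subr0_eq (K1 y Oy)) (subr0_eq (K2 y Oy)) (e y Oy).
  have -> : clmul (g1 y) (F y + mu *: J) + clmul (g2 y) (F y - mu *: J) -
      clmul (g1 y + g2 y) (F y) = mu *: clmul (g1 y - g2 y) J.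
    rewrite ?(clmulDr, clmulDl, clmulNr, clmulNl, clmulZr, clmulZl).
    move: (clmul (g1 y) (F y)) (clmul (g1 y) J) (clmul (g2 y) (F y)) (clmul (g2 y) J) => a b c d.
    by apply/ffunP => C; rewrite !ffunE !scC; ring.
  by rewrite clmulZl sq.
rewrite {1}/AopJ.
rewrite (dirac_loc oOm (h := fun z => mu *: (g1 z - g2 z)) hAg Ox).
rewrite (@dirac_scale _ _ Om) //; last exact: sm_sub.
rewrite dirac_sub // (subr0_eq (K1 x Ox)) (subr0_eq (K2 x Ox)) hAg // (e x Ox).
have -> : mu *: (clmul (g1 x) (F x + mu *: J) - clmul (g2 x) (F x - mu *: J)) -
    clmul (mu *: (g1 x - g2 x)) (F x) = mu ^+ 2 *: clmul (g1 x + g2 x) J.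
  rewrite ?(clmulDr, clmulDl, clmulNr, clmulNl, clmulZr, clmulZl).
  move: (clmul (g1 x) (F x)) (clmul (g1 x) J) (clmul (g2 x) (F x)) (clmul (g2 x) J) => a b c d.
  by apply/ffunP => C; rewrite !ffunE !scC; ring.
by rewrite clmulZl sq subrr.
Qed.

End Main.
Lemma ds_ext (R : realType) (n : nat) (Om : set 'rV[R]_n)
  (S K1 K2 S' K1' K2' : ('rV[R]_n -> Cl R n) -> Prop) :
  S = S' -> K1 = K1' -> K2 = K2' ->
  direct_sum_on Om S K1 K2 -> direct_sum_on Om S' K1' K2'.
Proof. by move=> -> -> ->. Qed.

Theorem theorem7p1 (R : realType) (n : nat) (Om : set 'rV[R]_n)
  (f : 'rV[R]_n -> 'rV[R]_n) (lam : R[i]) :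
  (2 %| n)%N -> odd (n %/ 2) ->
  open Om ->
  smooth_on Om (fun x => clvec (f x)) ->
  lam != 0 ->
  let fc := fun x => clvec (f x) in
  direct_sum_on Om
    (ker_on Om (fun g x => Aop fc (Aop fc g) x - lam ^+ 2 *: g x))
    (ker_on Om (fun g x => dirac_op g x - clmul (g x) (fc x + lam *: ieN R n)))
    (ker_on Om (fun g x => dirac_op g x - clmul (g x) (fc x - lam *: ieN R n)))
  /\
  direct_sum_on Om
    (ker_on Om (fun g x => Bop fc (Bop fc g) x - lam ^+ 2 *: g x))
    (ker_on Om (fun g x => dirac_op g x + clmul (g x) (fc x - lam *: ieN R n)))
    (ker_on Om (fun g x => dirac_op g x + clmul (g x) (fc x + lam *: ieN R n))).
Proof.
move=> h2 ho oOm sf lam0 fc.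
have hJ : forall X, clmul (clmul X (ieN R n)) (ieN R n) = X.
  by move=> X; exact: clmul_ieN2.
split; first exact: (gen oOm hJ sf lam0).
have sfn : smooth_on Om (fun x => - fc x).
  apply: (sm_eq oOm _ (sm_scale oOm (-1) sf)) => y _.
  by rewrite scaleN1r.
apply: ds_ext (gen oOm hJ sfn lam0).
- have -> : Bop fc = AopJ (ieN R n) (fun x => - fc x).
    apply/funext => g; apply/funext => x.
    by rewrite /Bop /AopJ /Mr clmulNr opprK.
  by [].
- apply/funext => g; congr (ker_on Om _ g); apply/funext => h; apply/funext => x.
  have -> : - fc x + lam *: ieN R n = - (fc x - lam *: ieN R n) by rewrite opprB addrC.
  by rewrite clmulNr opprK.
- apply/funext => g; congr (ker_on Om _ g); apply/funext => h; apply/funext => x.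
  have -> : - fc x - lam *: ieN R n = - (fc x + lam *: ieN R n) by rewrite opprD.
  by rewrite clmulNr opprK.
Qed.
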